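(* Let $\mathcal{Z}=\{z_1,\dots,z_K\}$, $p_i>0$ with $\sum_i p_i=1$, and $\omega_{ij}=\omega_{ji}\ge0$. Let $G$ be the graph on $\{1,\dots,K\}$ with an edge between $i\neq j$ whenever $\omega_{ij}>0$. Then a function $f:\mathcal{Z}\to\mathbb{R}$ minimizes $$\mathcal{L}_{\omega,\mathrm{disc}}(f)=\sum_{i=1}^K\sum_{j=1}^K p_i\,\omega_{ij}\left[\tanh\!\left(\frac{f(z_i)-f(z_j)}{2}\right)-1\right]^2$$ over all functions $\mathcal{Z}\to\mathbb{R}$ if and only if $f(z_i)-\log p_i$ is constant on each connected component of $G$. In particular, if $G$ is connected, the minimizers are exactly $f(z_i)=\log p_i+C$, $C\in\mathbb{R}$. *)

(* Defs.v *)
From HB Require Import structures.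
From mathcomp Require Import all_boot all_order all_algebra.
From mathcomp Require Import all_classical all_reals.
From mathcomp Require Import all_analysis.
Set Implicit Arguments. Unset Strict Implicit. Unset Printing Implicit Defensive.
Import Order.TTheory GRing.Theory Num.Theory.
Local Open Scope ring_scope.

Definition tanh {R : realType} (x : R) : R :=
  (expR x - expR (- x)) / (expR x + expR (- x)).

(* the discrete loss L_{omega,disc}(f); points z_1..z_K indexed by 'I_K *)
Definition Ldisc {R : realType} {K : nat} (p : 'I_K -> R)
  (w : 'I_K -> 'I_K -> R) (f : 'I_K -> R) : R :=
  \sum_(i < K) \sum_(j < K) p i * w i j * (tanh ((f i - f j) / 2) - 1) ^+ 2.

Definition Gadj {R : realType} {K : nat} (w : 'I_K -> 'I_K -> R) : rel 'I_K :=
  fun i j => (i != j) && (0 < w i j).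

Definition Gconnected {R : realType} {K : nat} (w : 'I_K -> 'I_K -> R) : Prop :=
  forall i j : 'I_K, connect (Gadj w) i j.

Definition is_minimizer {R : realType} {K : nat} (p : 'I_K -> R)
  (w : 'I_K -> 'I_K -> R) (f : 'I_K -> R) : Prop :=
  forall g : 'I_K -> R, Ldisc p w f <= Ldisc p w g.

(* Main.v *)
Require Import Defs.
From HB Require Import structures.
From mathcomp Require Import all_boot all_order all_algebra.
From mathcomp Require Import all_classical all_reals.
From mathcomp Require Import all_analysis.
From mathcomp Require Import ring lra.
Import Order.TTheory GRing.Theory Num.Theory.
Local Open Scope ring_scope.

Lemma tanh_m1 (R : realType) (x : R) : tanh (x / 2) - 1 = - 2 / (1 + expR x).
Proof.
rewrite /tanh.
have -> : expR x = expR (x/2) * expR (x/2) by rewrite -expRD; congr expR; field.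
rewrite expRN.
have e0 := expR_gt0 (x/2).
set e := expR (x/2) in e0 *.
have ne : e != 0 by rewrite gt_eqF.
have h1 : e + e^-1 != 0 by rewrite gt_eqF // addr_gt0 // invr_gt0.
have h2 : 1 + e * e != 0 by rewrite gt_eqF // addr_gt0 // mulr_gt0.
by field; rewrite ne h2.
Qed.

Lemma key (R : realType) (a b s : R) : 0 < a -> 0 < b -> 0 < s ->
  a * (- 2 / (1 + s)) ^+ 2 + b * (- 2 / (1 + s^-1)) ^+ 2 - 4 * (a * b / (a + b))
  = 4 * (a - b * s) ^+ 2 / ((a + b) * (1 + s) ^+ 2).
Proof.
move=> a0 b0 s0.
have ns : s != 0 by rewrite gt_eqF.
have h1 : 1 + s != 0 by rewrite gt_eqF // addr_gt0.
have h2 : 1 + s^-1 != 0 by rewrite gt_eqF // addr_gt0 // invr_gt0.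
have h3 : a + b != 0 by rewrite gt_eqF // addr_gt0.
have -> : 1 + s^-1 = (1 + s) / s by field.
by field; rewrite ns h1 h3.
Qed.

Section Main.
Variables (R : realType) (K : nat) (p : 'I_K -> R) (w : 'I_K -> 'I_K -> R).
Hypotheses (hp : forall i, 0 < p i) (hsym : forall i j, w i j = w j i)
  (hw : forall i j, 0 <= w i j).

Let T (f : 'I_K -> R) i j := p i * w i j * (tanh ((f i - f j) / 2) - 1) ^+ 2.
Let D (f : 'I_K -> R) i j :=
  T f i j + T f j i - 4 * (w i j * (p i * p j / (p i + p j))).
Let C := \sum_(i < K) \sum_(j < K) 4 * (w i j * (p i * p j / (p i + p j))).
Let SD f := \sum_(i < K) \sum_(j < K) D f i j.

Lemma D_eq f i j : D f i j = w i j * (4 * (p i - p j * expR (f i - f j)) ^+ 2 /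
   ((p i + p j) * (1 + expR (f i - f j)) ^+ 2)).
Proof.
rewrite /D /T !tanh_m1 -(hsym i j).
have -> : f j - f i = - (f i - f j) by rewrite opprB.
rewrite expRN -key //; last exact: expR_gt0.
ring.
Qed.

Lemma D_ge0 f i j : 0 <= D f i j.
Proof.
rewrite D_eq mulr_ge0 // divr_ge0 //; first by rewrite mulr_ge0 // sqr_ge0.
by rewrite mulr_ge0 // ?sqr_ge0 // addr_ge0 // ltW.
Qed.

Lemma D_eq0 f i j : D f i j = 0 <-> (w i j = 0 \/ f i - ln (p i) = f j - ln (p j)).
Proof.
rewrite D_eq.
have pos : 0 < (p i + p j) * (1 + expR (f i - f j)) ^+ 2.
  by rewrite mulr_gt0 // ?addr_gt0 // exprn_gt0 // addr_gt0 // expR_gt0.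
split.
- move/eqP; rewrite mulf_eq0 => /orP [/eqP -> | ]; first by left.
  rewrite mulf_eq0 invr_eq0 (gt_eqF pos) orbF mulf_eq0 sqrf_eq0 subr_eq0.
  move=> /orP [/eqP four|/eqP E]; first by move: four; lra.
  right.
  have : ln (p i) = ln (p j) + (f i - f j).
    by rewrite E lnM ?expRK // posrE ?expR_gt0.
  move=> ->; ring.
- case=> [-> | E]; first by rewrite mul0r.
  have -> : p j * expR (f i - f j) = p i.
    have -> : f i - f j = ln (p i) - ln (p j) by lra.
    rewrite expRD expRN !lnK ?posrE //; field.
    by rewrite gt_eqF.
  by rewrite subrr expr0n /= mulr0 mul0r mulr0.
Qed.

Lemma Ldisc_SD f : Ldisc p w f + Ldisc p w f = SD f + C.
Proof.
rewrite {2}/Ldisc exchange_big /= /Ldisc -big_split /SD /C -big_split /=.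
apply: eq_bigr => i _; rewrite -!big_split; apply: eq_bigr => j _ /=.
rewrite /D /T; ring.
Qed.

Lemma SD_ge0 f : 0 <= SD f.
Proof. by apply: sumr_ge0 => i _; apply: sumr_ge0 => j _; exact: D_ge0. Qed.

Lemma SD_ln : SD (fun i => ln (p i)) = 0.
Proof.
apply: big1 => i _; apply: big1 => j _; apply: (proj2 (D_eq0 _ _ _)); right; by rewrite /= !subrr.
Qed.

Lemma minim_iff f : is_minimizer p w f <-> SD f = 0.
Proof.
split.
- move=> H; have := H (fun i => ln (p i)).
  have := Ldisc_SD f; have := Ldisc_SD (fun i => ln (p i)).
  rewrite SD_ln; have := SD_ge0 f; lra.
- move=> H g; have := Ldisc_SD f; have := Ldisc_SD g; have := SD_ge0 g.
  rewrite H; lra.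
Qed.

Lemma SD0_iff f : SD f = 0 <-> forall i j, w i j = 0 \/ f i - ln (p i) = f j - ln (p j).
Proof.
split.
- move=> H i j; apply: (proj1 (D_eq0 _ _ _)).
  have Hge : forall i, predT i -> 0 <= \sum_(j < K) D f i j.
    by move=> k _; apply: sumr_ge0 => l _; exact: D_ge0.
  have Hi := psumr_eq0P Hge H (isT : predT i).
  exact: (psumr_eq0P (P:=predT) (fun j _ => D_ge0 f i j) Hi (isT : predT j)).
- move=> H; apply: big1 => i _; apply: big1 => j _; exact: (proj2 (D_eq0 _ _ _)).
Qed.

Lemma main1 f : is_minimizer p w f <->
  (forall i j, connect (Gadj w) i j -> f i - ln (p i) = f j - ln (p j)).
Proof.
rewrite minim_iff SD0_iff; split.
- move=> H i j /connectP [s].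
  elim: s i => [|k s IH] i /=; first by move=> _ ->.
  move=> /andP [/andP [_ wk] pth] Hl.
  rewrite -(IH k pth Hl).
  by case: (H i k) => // E; move: wk; rewrite E ltxx.
- move=> H i j.
  have [<-|ne] := eqVneq i j; first by right.
  have [wp|] := ltP 0 (w i j).
    right; apply: H; apply: connect1; by rewrite /Gadj ne wp.
  by move=> wle; left; apply/le_anti; rewrite wle hw.
Qed.

End Main.

Theorem mainTheorem5 (R : realType) (K : nat) (p : 'I_K -> R)
  (w : 'I_K -> 'I_K -> R)
  (hp : forall i, 0 < p i) (hsum : \sum_(i < K) p i = 1)
  (hsym : forall i j, w i j = w j i) (hw : forall i j, 0 <= w i j) :
  (forall f : 'I_K -> R,
     is_minimizer p w f <->
     (forall i j, connect (Gadj w) i j -> f i - ln (p i) = f j - ln (p j))) /\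
  (Gconnected w -> forall f : 'I_K -> R,
     is_minimizer p w f <-> exists C : R, forall i, f i = ln (p i) + C).
Proof.
split; first exact: main1.
move=> Hc f; rewrite main1 //; split.
- move=> H.
  have [i0 _|none] := pickP (fun _ : 'I_K => true).
    exists (f i0 - ln (p i0)) => i; rewrite -(H i i0 (Hc i i0)); ring.
  by exists 0 => i; move: (none i).
- move=> [c Hf] i j _; rewrite !Hf; ring.
Qed.
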